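(* Let $k$ be an algebraically closed field and $X\subset\mathbb P_k^{n-1}$ a smooth simplicial projective toric variety. Then $X$ is an ideal-theoretic complete intersection if and only if $X$ is the plane monomial curve defined parametrically by $x_1=t_1^2,\ x_2=t_2^2,\ x_3=t_1t_2$.
   Context: $e_1,\ldots,e_m$ is the canonical basis of $\mathbb Z^m$. For distinct nonzero $a_1,\ldots,a_n\in\mathbb N^m$, $I_{\mathcal A}\subset k[x_1,\ldots,x_n]$ is the kernel of $x_i\mapsto t^{a_i}=t_1^{a_{i1}}\cdots t_m^{a_{im}}$. A simplicial projective toric variety is $V(I_{\mathcal A})\subset\mathbb P^{n-1}_k$ where $n>m$, $a_l=de_l$ ($1\le l\le m$) for some $d\in\mathbb Z^+$, and each $a_i$, $i>m$, has coordinate sum $d$. A variety is an ideal-theoretic complete intersection if its defining ideal $I_{\mathcal A}$ is minimally generated by as many elements as its height $n-m$. The variety given parametrically by monomials $x_l=t^{b_l}$ is $V(I_{\{b_l\}})$ (up to permuting coordinates). *)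

(* Defs.v *)
From HB Require Import structures.
From mathcomp Require Import all_boot all_order all_algebra.
Set Implicit Arguments. Unset Strict Implicit. Unset Printing Implicit Defensive.
Import GRing.Theory.
Local Open Scope ring_scope.

(* Multivariate polynomials in n variables over k, represented as finite
   formal sums: a list of (coefficient, exponent vector) terms.  Two such
   lists denote the same polynomial iff they have the same coefficients. *)
Definition mon (n : nat) := {ffun 'I_n -> nat}.
Definition mpol (k : Type) (n : nat) := seq (k * mon n).

Section MPoly.
Variables (k : fieldType) (n : nat).

Definition mcoef (f : mpol k n) (al : mon n) : k :=
  \sum_(x <- f | x.2 == al) x.1.

Definition mpeq (f g : mpol k n) : Prop := forall al, mcoef f al = mcoef g al.
Definition mpzero (f : mpol k n) : Prop := forall al, mcoef f al = 0.

Definition mpadd (f g : mpol k n) : mpol k n := f ++ g.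
Definition mpmul (f g : mpol k n) : mpol k n :=
  [seq ((x.1 * y.1 : k), ([ffun i => (x.2 i + y.2 i)%N] : mon n)) | x : k * mon n <- f, y : k * mon n <- g].
Definition mpsum r (h : 'I_r -> mpol k n) : mpol k n :=
  flatten [seq h i | i <- enum 'I_r].

Definition mpeval (p : 'I_n -> k) (f : mpol k n) : k :=
  \sum_(x <- f) x.1 * \prod_(i < n) p i ^+ x.2 i.

Definition mpderiv (j : 'I_n) (f : mpol k n) : mpol k n :=
  [seq ((x.1 *+ x.2 j : k), ([ffun i => if i == j then (x.2 i).-1 else x.2 i] : mon n)) | x : k * mon n <- f].
End MPoly.

Section Toric.
Variables (k : fieldType) (n m : nat) (a : 'I_n -> mon m).

(* the k-algebra map x_i |-> t^{a_i} from k[x_1..x_n] to k[t_1..t_m] *)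
Definition monmap (f : mpol k n) : mpol k m :=
  [seq (x.1, ([ffun l => (\sum_(i < n) x.2 i * a i l)%N] : mon m)) | x : k * mon n <- f].

Definition inIA (f : mpol k n) : Prop := mpzero (monmap f).

Definition generates_IA r (g : 'I_r -> mpol k n) : Prop :=
  (forall i, inIA (g i)) /\
  forall f, inIA f -> exists h : 'I_r -> mpol k n,
      mpeq f (mpsum (fun i => mpmul (h i) (g i))).

(* ideal-theoretic complete intersection: I_A is minimally generated by
   height(I_A) = n - m elements *)
Definition ici : Prop :=
  (exists g : 'I_(n - m) -> mpol k n, generates_IA g) /\
  (forall r (g : 'I_r -> mpol k n), generates_IA g -> (n - m <= r)%N).

(* points of V(I_A) in P^{n-1}(k), in homogeneous coordinates *)
Definition inV (p : 'I_n -> k) : Prop :=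
  (exists i, p i != 0) /\ forall f, inIA f -> mpeval p f = 0.

Definition jacobian r (g : 'I_r -> mpol k n) (p : 'I_n -> k) : 'M[k]_(r, n) :=
  \matrix_(i < r, j < n) mpeval p (mpderiv j (g i)).

(* Smoothness of V(I_A) (Jacobian criterion): at every point of V(I_A) the
   Jacobian matrix of I_A has rank equal to the codimension n - m. *)
Definition smooth_V : Prop :=
  forall p, inV p ->
    (forall r (g : 'I_r -> mpol k n), (forall i, inIA (g i)) ->
        (\rank (jacobian g p) <= n - m)%N) /\
    (exists r (g : 'I_r -> mpol k n), (forall i, inIA (g i)) /\
        \rank (jacobian g p) = (n - m)%N).

Definition simplicial_proj_toric_data : Prop :=
  [/\ (m < n)%N, injective a, (forall i, a i != [ffun => 0%N]) &
      exists d : nat, [/\ (0 < d)%N,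
        (forall (i : 'I_n) (l : 'I_m), val i = val l ->
            forall l', a i l' = if l' == l then d else 0%N) &
        (forall i : 'I_n, (m <= i)%N -> (\sum_(l < m) a i l)%N = d)]].
End Toric.

(* exponents of the plane curve x1 = t1^2, x2 = t2^2, x3 = t1 t2 *)
Definition curveB (i : 'I_3) : mon 2 :=
  [ffun l : 'I_2 => match val i, val l with
                    | 0, 0 => 2%N | 1, 1 => 2%N | 2, _ => 1%N | _, _ => 0%N end].

(* Main.v *)
Require Import Defs.
From HB Require Import structures.
From mathcomp Require Import all_boot all_order all_algebra.
From Stdlib Require Import ClassicalEpsilon.
From mathcomp Require Import zify ring.
From Stdlib Require Import Lia.
Set Implicit Arguments. Unset Strict Implicit. Unset Printing Implicit Defensive.
Import GRing.Theory.
Local Open Scope ring_scope.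


Section Gen.
Variable k : fieldType.

Lemma sum_vanish (X T : eqType) (f : seq X) (P : pred X) (phi : X -> T) (F : X -> k) :
  (forall y, y \in f -> P y -> \sum_(x <- f | P x && (phi x == phi y)) F x = 0) ->
  \sum_(x <- f | P x) F x = 0.
Proof.
move=> H.
set U := undup [seq phi x | x <- f & P x].
have uU : uniq U by apply: undup_uniq.
transitivity (\sum_(x <- f | P x) \sum_(b <- U) (if phi x == b then F x else 0)).
  rewrite big_seq_cond [RHS]big_seq_cond; apply: eq_bigr => x /andP[xf Px].
  have xU : phi x \in U by rewrite mem_undup; apply/mapP; exists x => //; rewrite mem_filter Px.
  rewrite (bigD1_seq (phi x)) //= eqxx big1 ?addr0 // => b; rewrite eq_sym => /negbTE ->//.
rewrite exchange_big /=; apply: big1_seq => b /andP[_ bU].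
move: bU; rewrite mem_undup => /mapP[y]; rewrite mem_filter => /andP[Py yf] ->.
rewrite -big_mkcondr /=; exact: H.
Qed.

End Gen.

Section T.
Variables (k : fieldType) (n m : nat) (a : 'I_n -> mon m) (d : nat).
Hypotheses (d_gt0 : (0 < d)%N) (ainj : injective a)
  (asum : forall i, (\sum_(l < m) a i l)%N = d)
  (avert : forall (i : 'I_n) (l : 'I_m), val i = val l ->
      forall l', a i l' = if l' == l then d else 0%N).

Definition img (al : mon n) : mon m := [ffun l => (\sum_(i < n) al i * a i l)%N].
Definition madd (x y : mon n) : mon n := [ffun i => (x i + y i)%N].
Definition ev (j : 'I_n) : mon n := [ffun i => nat_of_bool (i == j)].
Definition smul c (x : mon n) : mon n := [ffun i => (c * x i)%N].
Definition alpha l c j := madd (smul c (ev l)) (ev j).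

Lemma mcoef_monmap (f : mpol k n) b :
  mcoef (monmap a f) b = \sum_(x <- f | img x.2 == b) x.1.
Proof. by rewrite /mcoef big_map. Qed.

Lemma imgD x y l : img (madd x y) l = (img x l + img y l)%N.
Proof. by rewrite !ffunE -big_split; apply: eq_bigr => i _; rewrite ffunE mulnDl. Qed.

Lemma img_ev j l : img (ev j) l = a j l.
Proof.
rewrite ffunE (bigD1 j) //= ffunE eqxx mul1n big1 ?addn0 // => i /negbTE ij.
by rewrite ffunE ij.
Qed.

Lemma img_smul c x l : img (smul c x) l = (c * img x l)%N.
Proof. rewrite !ffunE big_distrr; apply: eq_bigr => i _; by rewrite ffunE -mulnA. Qed.

Lemma img_alpha l c j l' : img (alpha l c j) l' = (c * a l l' + a j l')%N.
Proof. by rewrite imgD img_smul !img_ev. Qed.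

Lemma deg g : (\sum_(l < m) img g l = d * \sum_(i < n) g i)%N.
Proof.
under eq_bigr do rewrite ffunE.
rewrite exchange_big big_distrr; apply: eq_bigr => i _.
by rewrite -big_distrr /= asum mulnC.
Qed.

Lemma mon_eq (x y : mon n) : (forall i, x i = y i) -> x = y.
Proof. by move=> H; apply/ffunP. Qed.

Lemma img_le (g : mon n) i l : (g i * a i l <= img g l)%N.
Proof. by rewrite ffunE (bigD1 i) //= leq_addr. Qed.

Lemma fiber_vertex (lv : 'I_n) (lm : 'I_m) c g : val lv = val lm ->
  img g = img (smul c (ev lv)) -> g = smul c (ev lv).
Proof.
move=> vl H.
have Hz : forall i, i != lv -> g i = 0%N.
  move=> i ilv; apply/eqP; rewrite -leqn0 leqNgt; apply/negP => gi.
  have [l' /andP[l'l al']] : exists l', (l' != lm) && (0 < a i l')%N.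
    case: (pickP (fun l' => (l' != lm) && (0 < a i l')%N)) => [l' Hl|Hall0]; first by exists l'.
    exfalso.
    have Hall : forall x, x != lm -> ~~ (0 < a i x)%N.
      by move=> x xl; move: (Hall0 x); rewrite /= xl /= => ->.
    have ae : a i = a lv.
      apply/ffunP => l'; rewrite (avert vl).
      case: eqP => [->|/eqP ne]; last by apply/eqP; rewrite -leqn0 leqNgt Hall.
      rewrite -(asum i) (bigD1 lm) //= big1 ?addn0 // => l2 /Hall.
      by rewrite lt0n negbK => /eqP.
    by move/negP: ilv; apply; apply/eqP; apply: ainj.
  have := img_le g i l'; rewrite H img_smul img_ev (avert vl) (negbTE l'l) muln0.
  by rewrite leqn0 muln_eq0 => /orP[/eqP E|/eqP E]; [move: gi|move: al']; rewrite E.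
apply/ffunP => i; rewrite !ffunE.
case: (eqVneq i lv) => [->|ilv]; last by rewrite Hz // muln0.
rewrite muln1; move/(congr1 (fun f : mon m => f lm)): H.
rewrite img_smul img_ev (avert vl) eqxx ffunE (bigD1 lv) //= big1 ?addn0.
  by rewrite (avert vl) eqxx => /eqP; rewrite eqn_mul2r (gtn_eqF d_gt0) /= => /eqP.
by move=> i' /Hz ->.
Qed.


Definition mz : mon n := [ffun => 0%N].

Lemma mcoef_mpsum r (h : 'I_r -> mpol k n) al :
  mcoef (mpsum h) al = \sum_(i < r) mcoef (h i) al.
Proof. by rewrite /mcoef /mpsum big_flatten /= big_map big_enum. Qed.

Lemma mcoef_mpmul (h g : mpol k n) al :
  mcoef (mpmul h g) al =
  \sum_(x <- h) \sum_(y <- g | madd x.2 y.2 == al) x.1 * y.1.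
Proof.
rewrite /mcoef /mpmul big_mkcond big_allpairs_dep /=; apply: eq_bigr => x _.
by rewrite [RHS]big_mkcond.
Qed.

Definition Iso (al : mon n) := forall g, img g = img al -> g <> al ->
  forall i, (0 < g i)%N -> al i = 0%N.

Lemma iso_mul (al : mon n) (h g : mpol k n) : Iso al -> inIA a g ->
  mcoef (mpmul h g) al = mcoef h mz * mcoef g al.
Proof.
move=> Hiso Hg; rewrite mcoef_mpmul /mcoef big_distrl /= (bigID (fun x => x.2 == mz)) /=.
rewrite [X in _ + X = _]big1 ?addr0; last first.
  move=> x xnz; rewrite -big_distrr /=.
  have [i xi] : exists i, (0 < x.2 i)%N.
    case: (pickP (fun i => 0 < x.2 i)%N) => [i Hi|H0]; first by exists i.
    by case/negP: xnz; apply/eqP/ffunP => i; rewrite ffunE; move: (H0 i) => /= /negbT; rewrite lt0n negbK => /eqP.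
  case: (boolP (has (fun y : k * mon n => madd x.2 y.2 == al) g)) => [/hasP[y0 y0g /eqP y0e]|hn]; last first.
    rewrite big1_seq ?mulr0 // => y /andP[e yg]; case/negP: (hasPn hn y yg); exact: e.
  rewrite big_seq_cond (eq_bigl (fun y : k * mon n => (y \in g) && (img y.2 == img y0.2))); last first.
    move=> y; case yg: (y \in g) => //=.
    apply/eqP/eqP => [/eqP|E].
    rewrite -y0e => /eqP E; apply/ffunP => l; apply/eqP.
    by rewrite -(eqn_add2l (img x.2 l)) -!imgD E.
  have Ei : img (madd x.2 y.2) = img al.
    by apply/ffunP => l; rewrite imgD E -imgD y0e.
  case: (eqVneq (madd x.2 y.2) al) => // ne.
  have := Hiso _ Ei (fun e => (negP ne) (introT eqP e)) i.
  rewrite ffunE (leq_trans xi (leq_addr _ _)) => /(_ isT).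
  by rewrite -y0e ffunE => /eqP; rewrite addn_eq0 (gtn_eqF xi).
  by rewrite -big_seq_cond; move: (Hg (img y0.2)); rewrite mcoef_monmap => ->; rewrite mulr0.
rewrite big_seq_cond [RHS]big_seq_cond; apply: eq_bigr => x /andP[_ /eqP ->].
rewrite big_distrr /=; apply: eq_bigl => y; congr (_ == _).
by apply/ffunP => i; rewrite !ffunE.
Qed.

Definition binom (al be : mon n) : mpol k n := [:: (1, al); (-1, be)].

Lemma mcoef_binom al be g : mcoef (binom al be) g = (al == g)%:R - (be == g)%:R.
Proof. by rewrite /mcoef !big_cons big_nil /=; case: eqP; case: eqP => _ _; rewrite ?addr0 ?subr0 ?add0r ?sub0r ?subrr. Qed.

Lemma binom_inIA al be : img be = img al -> inIA a (binom al be).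
Proof.
move=> E b; rewrite mcoef_monmap /binom !big_cons big_nil /= E.
by case: eqP => _; rewrite ?addr0 ?subrr.
Qed.

Lemma gen_lb N (al be : 'I_N -> mon n) :
  (forall t, img (be t) = img (al t)) -> (forall t, be t != al t) ->
  (forall s t, s != t -> img (al s) != img (al t)) -> (forall t, Iso (al t)) ->
  forall r (g : 'I_r -> mpol k n), generates_IA a g -> (N <= r)%N.
Proof.
move=> Ebe nbe dal Hiso r g [Hg Hgen].
have hf : forall t, exists h : 'I_r -> mpol k n,
    mpeq (binom (al t) (be t)) (mpsum (fun i => mpmul (h i) (g i))).
  by move=> t; apply: Hgen; apply: binom_inIA.
pose hfun t := proj1_sig (constructive_indefinite_description _ (hf t)).
have hfP t : mpeq (binom (al t) (be t)) (mpsum (fun i => mpmul (hfun t i) (g i))).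
  exact: proj2_sig (constructive_indefinite_description _ (hf t)).
pose H := \matrix_(t < N, i < r) mcoef (hfun t i) mz.
pose G := \matrix_(i < r, s < N) mcoef (g i) (al s).
have HG : H *m G = 1%:M.
  apply/matrixP => t s; rewrite !mxE.
  transitivity (mcoef (binom (al t) (be t)) (al s)); last first.
    rewrite mcoef_binom; case: (eqVneq t s) => [->|ts].
      by rewrite eqxx (negbTE (nbe s)) subr0.
    have n1 : al t != al s by apply: contraNneq (dal _ _ ts) => ->.
    have n2 : be t != al s by apply: contraNneq (dal _ _ ts) => <-; rewrite Ebe.
    by rewrite (negbTE n1) (negbTE n2) subrr.
  rewrite hfP mcoef_mpsum; apply: eq_bigr => i _; rewrite !mxE.
  by rewrite iso_mul.
by rewrite -(mxrank1 k N) -HG mulmx_max_rank.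
Qed.


Definition asb (P : Prop) : bool := if excluded_middle_informative P then true else false.
Lemma asbP P : reflect P (asb P).
Proof. by rewrite /asb; case: excluded_middle_informative => H; constructor. Qed.

Definition dec (g : mon n) i : mon n := [ffun x => g x - (x == i)]%N.
Lemma madd_dec (g : mon n) i : (0 < g i)%N -> madd (dec g i) (ev i) = g.
Proof.
move=> gi; apply/ffunP => x; rewrite !ffunE.
by case: (eqVneq x i) => [->|_]; rewrite ?subn0 ?addn0 // subnK.
Qed.
Lemma img_dec (g : mon n) i l : (0 < g i)%N -> img g l = (img (dec g i) l + a i l)%N.
Proof. by move=> gi; rewrite -{1}(madd_dec gi) imgD img_ev. Qed.

Lemma alpha_l l c j : j != l -> alpha l c j l = c.
Proof. by move=> jl; rewrite !ffunE eqxx eq_sym (negbTE jl) muln1 addn0. Qed.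

Definition Bad (l j : 'I_n) := exists c g, img g = img (alpha l c j) /\ g <> alpha l c j.

Lemma sum_ev (j : 'I_n) : (\sum_(i < n) ev j i = 1)%N.
Proof. by rewrite (bigD1 j) //= ffunE eqxx big1 // => i /negbTE; rewrite ffunE => ->. Qed.

Lemma alpha0 l j : alpha l 0 j = ev j.
Proof. by apply/ffunP => i; rewrite !ffunE. Qed.

Lemma fiber_ev j (g : mon n) : img g = a j -> g = ev j.
Proof.
move=> E.
have s1 : (\sum_(i < n) g i = 1)%N.
  apply/eqP; rewrite -(eqn_pmul2l d_gt0) muln1 -deg E asum //.
have [i gi] : exists i, (0 < g i)%N.
  case: (pickP (fun i => 0 < g i)%N) => [i Hi|H0]; first by exists i.
  by move: s1; rewrite big1 // => i; move: (H0 i) => /= /negbT; rewrite lt0n negbK => /eqP.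
have Hz : forall x, x != i -> g x = 0%N.
  move=> x xi; move: s1; rewrite (bigD1 i) //= (bigD1 x) //=.
  by case: (g x) => // q; case: (g i) gi => // q'; rewrite !addSn addnS.
have gi1 : g i = 1%N.
  by move: s1; rewrite (bigD1 i) //= big1 ?addn0 // => x /andP[_ /Hz].
have ge : g = ev i.
  apply/ffunP => x; rewrite ffunE; case: (eqVneq x i) => [->|/Hz]//.
have ij : i = j by apply: ainj; rewrite -E ge; apply/ffunP => l; rewrite img_ev.
by rewrite ge ij.
Qed.

Lemma bad_min (l : 'I_n) (lm : 'I_m) (j : 'I_n) : val l = val lm -> j != l -> Bad l j ->
  exists c be, [/\ img be = img (alpha l c j), be <> alpha l c j, (0 < c)%N & Iso (alpha l c j)].
Proof.
move=> vl jl Hb.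
pose P c := asb (exists g, img g = img (alpha l c j) /\ g <> alpha l c j).
have exP : exists c, P c by case: Hb => c [g Hg]; exists c; apply/asbP; exists g.
case: (ex_minnP exP) => c /asbP [be [Ebe nbe]] cmin.
exists c, be; split => //.
  case: c cmin Ebe nbe => // _ Ebe nbe; case: nbe.
  rewrite alpha0 in Ebe *; apply: fiber_ev; apply/ffunP => l'; by rewrite Ebe img_ev.
move=> g Eg ng i gi; apply/eqP; rewrite !ffunE.
case: (eqVneq i j) => [eij|nij]; last first.
  rewrite addn0 muln_eq0; case: (eqVneq i l) => [eil|]; rewrite ?orbT //=.
  rewrite orbF; apply/negPn/negP; rewrite -lt0n => cp; exfalso.
  subst i.
  have E' : img (dec g l) = img (alpha l c.-1 j).
    apply/ffunP => l'; apply/eqP; rewrite -(eqn_add2r (a l l')) -img_dec // Eg.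
    rewrite !img_alpha -{1}(prednK cp) mulSn; apply/eqP; lia.
  have : P c.-1.
    apply/asbP; exists (dec g l); split => // e; apply: ng.
    rewrite -(madd_dec gi) e; apply/ffunP => x; rewrite !ffunE.
    case: (eqVneq x l) => [->|]; rewrite ?muln1 ?muln0 ?addn1 ?add0n ?addn0 //.
    by rewrite eq_sym (negbTE jl) !addn0 prednK.
  by move/cmin; rewrite leqNgt ltn_predL cp.
exfalso; subst i; apply: ng.
have E' : img (dec g j) = img (smul c (ev l)).
  apply/ffunP => l'; apply/eqP; rewrite -(eqn_add2r (a j l')) -img_dec // Eg.
  by rewrite img_alpha img_smul img_ev.
rewrite -(madd_dec gi) (fiber_vertex vl E') //.
Qed.


Lemma rank_cols r (J : 'M[k]_(r, n)) (B : {set 'I_n}) :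
  (forall i j, j \notin B -> J i j = 0) -> (\rank J <= #|B|)%N.
Proof.
move=> HJ.
have -> : J = (\matrix_(i < r, t < #|B|) J i (enum_val t)) *m
              (\matrix_(t < #|B|, j < n) ((enum_val t == j)%:R : k)).
  apply/matrixP => i j; rewrite !mxE.
  under eq_bigr do rewrite !mxE.
  rewrite -(big_enum_val (fun x => J i x * (x == j)%:R)) /= big_mkcond /=.
  rewrite (bigD1 j) //= eqxx mulr1 big1 ?addr0.
    by case: ifP => // /negbT /HJ ->.
  by move=> x /negbTE xj; rewrite xj mulr0 if_same.
exact: mulmx_max_rank.
Qed.

Section Vertex.
Variables (lv : 'I_n) (lm : 'I_m).
Hypothesis vl : val lv = val lm.

Definition pl (i : 'I_n) : k := (i == lv)%:R.

Lemma prod_pl (g : mon n) :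
  \prod_(i < n) pl i ^+ g i = (g == smul (g lv) (ev lv))%:R.
Proof.
case: eqP => [E|NE].
  rewrite big1 // => i _; rewrite /pl; case: (eqVneq i lv) => [_|il]; first by rewrite expr1n.
  by rewrite E ffunE ffunE (negbTE il) muln0 expr0.
have [i /andP[il gi]] : exists i, (i != lv) && (0 < g i)%N.
  case: (pickP (fun i => (i != lv) && (0 < g i)%N)) => [i Hi|H0]; first by exists i.
  case: NE; apply/ffunP => i; rewrite !ffunE.
  case: (eqVneq i lv) => [->|il]; first by rewrite muln1.
  by move: (H0 i); rewrite /= il /= muln0 => /negbT; rewrite lt0n negbK => /eqP.
rewrite (bigD1 i) //= /pl (negbTE il) expr0n (gtn_eqF gi) mul0r //.
Qed.

Lemma vert_vanish (f : mpol k n) (w : nat -> k) : inIA a f ->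
  \sum_(x <- f | x.2 == smul (x.2 lv) (ev lv)) x.1 * w (x.2 lv) = 0.
Proof.
move=> Hf; apply: (sum_vanish (phi := fun x : k * mon n => img x.2)) => y yf /eqP Py.
have Hx : forall x : k * mon n, img x.2 == img y.2 -> x.2 = y.2.
  move=> x /eqP E; rewrite Py in E *; exact: (fiber_vertex vl E).
rewrite (eq_bigl (fun x : k * mon n => img x.2 == img y.2)); last first.
  move=> x; apply/andP/idP => [[]//|Ex]; split => //; by rewrite (Hx _ Ex) -Py.
rewrite big_seq_cond (eq_bigr (fun x => x.1 * w (y.2 lv))); last first.
  by move=> x /andP[_ /Hx ->].
by rewrite -big_seq_cond -big_distrl /= -mcoef_monmap Hf mul0r.
Qed.

Lemma pl_inV : inV a pl.
Proof.
split; first by exists lv; rewrite /pl eqxx oner_neq0.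
move=> f Hf; rewrite /mpeval.
under eq_bigr do rewrite prod_pl.
rewrite big_mkcond /=; rewrite -[RHS](vert_vanish (fun _ => 1) Hf) [RHS]big_mkcond /=.
by apply: eq_bigr => x _; case: ifP; rewrite ?mulr1 ?mulr0.
Qed.

Lemma jac_zero r (g : 'I_r -> mpol k n) i j : (forall i, inIA a (g i)) ->
  j \notin [set j | (j != lv) && asb (Bad lv j)] -> jacobian g pl i j = 0.
Proof.
move=> Hg; rewrite inE mxE /mpeval big_map /=.
under eq_bigr do rewrite prod_pl.
case: (eqVneq j lv) => [->|jl] /= Hb.
  rewrite -[RHS](vert_vanish (fun c => c%:R) (Hg i)) [RHS]big_mkcond /=.
  apply: eq_bigr => x _; rewrite !ffunE eqxx.
  case: (posnP (x.2 lv)) => [E0|xp]; first by rewrite E0 mulr0n mul0r mulr0 if_same.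
  have -> : ([ffun i0 => if i0 == lv then (x.2 i0).-1 else x.2 i0] ==
      smul (x.2 lv).-1 (ev lv)) = (x.2 == smul (x.2 lv) (ev lv)).
    apply/eqP/eqP => E; apply/ffunP => i0; move/(congr1 (fun f : mon n => f i0)): E;
      rewrite !ffunE; case: (eqVneq i0 lv) => [->|]; rewrite ?muln1 ?muln0 //; lia.
  by case: ifP; rewrite ?mulr1 ?mulr0 // mulr_natr.
have good : forall c (h : mon n), img h = img (alpha lv c j) -> h = alpha lv c j.
  move=> c h E; apply/eqP/negPn/negP => ne; move: Hb; rewrite /=.
  suff -> : asb (Bad lv j) by [].
  by apply/asbP; exists c, h; split => // e; rewrite e eqxx in ne.
transitivity (\sum_(x <- g i | x.2 == alpha lv (x.2 lv) j) x.1); last first.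
  apply: (sum_vanish (phi := fun x : k * mon n => img x.2)) => y yf /eqP Py.
  rewrite (eq_bigl (fun x : k * mon n => img x.2 == img y.2)); last first.
    move=> x; apply/andP/idP => [[]//|/eqP Ex]; split; last by apply/eqP.
    by rewrite Py in Ex; rewrite (good _ _ Ex) alpha_l.
  by move: (Hg i (img y.2)); rewrite mcoef_monmap.
rewrite [RHS]big_mkcond /=; apply: eq_bigr => x _.
case: (posnP (x.2 j)) => [E0|xp]; first by rewrite E0 mulr0n mul0r; case: ifP => // /eqP E; move: E0; rewrite E !ffunE eqxx (negbTE jl) muln0.
set D := [ffun _ => _].
have Dl : D lv = x.2 lv by rewrite ffunE eq_sym (negbTE jl).
rewrite Dl.
have -> : (D == smul (x.2 lv) (ev lv)) = (x.2 == alpha lv (x.2 lv) j).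
  apply/eqP/eqP => E; apply/ffunP => i0; move/(congr1 (fun f : mon n => f i0)): E;
    rewrite !ffunE; case: (eqVneq i0 j) => [->|ij]; rewrite ?(negbTE jl) ?eqxx ?(negbTE ij) /=;
    try case: (eqVneq i0 lv) => [->|?]; rewrite ?eqxx /=; lia.
case: ifP => [/eqP E|]; last by rewrite mulr0.
by rewrite E !ffunE eqxx (negbTE jl) muln0 mulr1.
Qed.

Lemma jac_bound : smooth_V k a ->
  (n - m <= #|[set j | (j != lv) && asb (Bad lv j)]|)%N.
Proof.
move=> Hs; have [_ [r [g [Hg <-]]]] := Hs _ pl_inV.
apply: rank_cols => i j; exact: jac_zero.
Qed.

End Vertex.


Lemma adeg_lt (l j : 'I_n) (lm : 'I_m) : val l = val lm -> j != l -> (a j lm < d)%N.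
Proof.
move=> vl jl; rewrite ltn_neqAle; apply/andP; split; last first.
  by rewrite -(asum j) (bigD1 lm) //= leq_addr.
apply/eqP => E; case/eqP: jl; apply: ainj; apply/ffunP => l'.
rewrite (avert vl); case: eqP => [->//|/eqP ne].
have := asum j; rewrite (bigD1 lm) //= E (bigD1 l') /=; last by rewrite ne.
move=> /eqP.
by rewrite -{2}[d]addn0 eqn_add2l addn_eq0 => /andP[/eqP].
Qed.

Lemma img_alpha_inj (l : 'I_n) c c' j j' :
  img (alpha l c j) = img (alpha l c' j') -> j = j'.
Proof.
move=> E.
have ec : c = c'.
  have := congr1 (fun f : mon m => \sum_(l0 < m) f l0)%N E; rewrite /= !deg.
  move/eqP; rewrite eqn_pmul2l //; rewrite (eq_bigr (fun i => c * ev l i + ev j i)%N);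
    last by move=> i _; rewrite !ffunE.
  rewrite [X in _ == X](eq_bigr (fun i => c' * ev l i + ev j' i)%N); last by move=> i _; rewrite !ffunE.
  by rewrite !big_split /= -!big_distrr /= !sum_ev !muln1 eqn_add2r => /eqP.
subst c'; apply: ainj; apply/ffunP => l'.
have := congr1 (fun f : mon m => f l') E; rewrite /= !img_alpha => /eqP.
by rewrite eqn_add2l => /eqP.
Qed.

Lemma bad_fun : exists (cf : 'I_n -> 'I_n -> nat) (bf : 'I_n -> 'I_n -> mon n),
  forall (l : 'I_n) (lm : 'I_m) (j : 'I_n), val l = val lm -> j != l -> Bad l j ->
  [/\ img (bf l j) = img (alpha l (cf l j) j), bf l j <> alpha l (cf l j) j,
      (0 < cf l j)%N & Iso (alpha l (cf l j) j)].
Proof.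
have H : forall lj : 'I_n * 'I_n, exists p : nat * mon n,
  forall lm : 'I_m, val lj.1 = val lm -> lj.2 != lj.1 -> Bad lj.1 lj.2 ->
  [/\ img p.2 = img (alpha lj.1 p.1 lj.2), p.2 <> alpha lj.1 p.1 lj.2,
      (0 < p.1)%N & Iso (alpha lj.1 p.1 lj.2)].
  move=> [l j] /=.
  case: (excluded_middle_informative (exists lm : 'I_m, val l = val lm /\ j != l /\ Bad l j)).
    move=> [lm [vl [jl Hb]]].
    have [c [be HH]] := bad_min vl jl Hb.
    by exists (c, be) => lm' _ _ _.
  by move=> nH; exists (0%N, mz) => lm vl jl Hb; case: nH; exists lm.
pose f lj := proj1_sig (constructive_indefinite_description _ (H lj)).
exists (fun l j => (f (l, j)).1), (fun l j => (f (l, j)).2) => l lm j vl jl Hb.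
exact: (proj2_sig (constructive_indefinite_description _ (H (l, j))) lm vl jl Hb).
Qed.

Lemma not_ici_big : smooth_V k a -> (1 < m)%N -> (m < n)%N -> (2 <= n - m)%N -> ~ ici k a.
Proof.
move=> Hs m2 mn nm2 [[gg Hgg] _].
have n0 : (0 < n)%N by lia.
have n1 : (1 < n)%N by lia.
have m0 : (0 < m)%N by apply: ltnW.
pose l0 : 'I_n := Ordinal n0. pose k1 : 'I_n := Ordinal n1.
pose lm0 : 'I_m := Ordinal m0. pose km1 : 'I_m := Ordinal m2.
have v0 : val l0 = val lm0 by [].
have v1 : val k1 = val km1 by [].
set B0 := [set j | (j != l0) && asb (Bad l0 j)].
set B1 := [set j | (j != k1) && asb (Bad k1 j)].
have hB0 : (n - m <= #|B0|)%N := jac_bound v0 Hs.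
have hB1 : (n - m <= #|B1|)%N := jac_bound v1 Hs.
have [jx jxB jx0] : exists2 jx, jx \in B1 & jx != l0.
  have : (0 < #|B1 :\ l0|)%N.
    move: (cardsD1 l0 B1); case: (l0 \in B1) => /= E; rewrite E in hB1; simpl in hB1; lia.
  move/card_gt0P => -[x]; rewrite in_setD1 => /andP[x0 xB]; by exists x.
have [cf [bf Hcb]] := bad_fun.
pose N := (#|B0| + 1)%N.
pose sel (t : 'I_N) : 'I_n * 'I_n := match split t with inl u => (l0, enum_val u) | inr _ => (k1, jx) end.
pose al t := alpha (sel t).1 (cf (sel t).1 (sel t).2) (sel t).2.
pose be t := bf (sel t).1 (sel t).2.
have Hsel : forall t : 'I_N, exists lm : 'I_m, [/\ val (sel t).1 = val lm, (sel t).2 != (sel t).1 & Bad (sel t).1 (sel t).2].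
  move=> t; rewrite /sel; case: (split t) => [u|u].
    have := enum_valP u; rewrite inE => /andP[jl /asbP Hb]; by exists lm0.
  by move: jxB; rewrite inE => /andP[jl /asbP Hb]; exists km1.
have Hal : forall t : 'I_N, [/\ img (be t) = img (al t), be t <> al t, (0 < cf (sel t).1 (sel t).2)%N & Iso (al t)].
  by move=> t; have [lm [vl jl Hb]] := Hsel t; apply: Hcb vl jl Hb.
suff : (N <= n - m)%N by rewrite /N; lia.
apply: (@gen_lb N al be _ _ _ _ _ gg Hgg).
- by move=> t; case: (Hal t).
- by move=> t; case: (Hal t) => _ ne _ _; apply/eqP.
- move=> s t st; apply/eqP => E.
  have sst : split s != split t by apply: contra st => /eqP e; rewrite -(splitK s) e splitK.
  move: E sst (Hal s) (Hal t); rewrite /al /sel.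
  case: split => [u|u]; case: split => [u'|u'] //.
  + by move=> /img_alpha_inj /enum_val_inj ->; rewrite eqxx.
  + move=> E _ [_ _ cp _] _; move: (congr1 (fun f : mon m => f lm0) E); rewrite /= !img_alpha.
    rewrite (avert v0) (avert v1) eqxx /= muln0 add0n.
    move: cp => /= cp; have := leq_pmull d cp; have := adeg_lt v0 jx0; lia.
  + move=> E _ _ [_ _ cp _]; move: (congr1 (fun f : mon m => f lm0) E); rewrite /= !img_alpha.
    rewrite (avert v0) (avert v1) eqxx /= muln0 add0n.
    move: cp => /= cp; have := leq_pmull d cp; have := adeg_lt v0 jx0; lia.
  + by case: u u' => [[]//] ? [[]//] ?; rewrite eqxx.
- by move=> t; case: (Hal t).
Qed.

Lemma bad_gj0 (l : 'I_n) (lm : 'I_m) j c g : val l = val lm -> j != l ->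
  img g = img (alpha l c j) -> g <> alpha l c j -> g j = 0%N.
Proof.
move=> vl jl Eg ng; apply/eqP; rewrite -leqn0 leqNgt; apply/negP => gi; apply: ng.
have E' : img (dec g j) = img (smul c (ev l)).
  apply/ffunP => l'; apply/eqP; rewrite -(eqn_add2r (a j l')) -img_dec // Eg.
  by rewrite img_alpha img_smul img_ev.
by rewrite -(madd_dec gi) (fiber_vertex vl E').
Qed.

Section Hyper.
Hypothesis mn : (m < n)%N.
Hypothesis nm1 : (n <= m.+1)%N.
Let s0 : 'I_n := Ordinal mn.
Let w := a s0.
Definition vtx (l : 'I_m) : 'I_n := Ordinal (ltn_trans (ltn_ord l) mn).

Lemma vtx_val l : val (vtx l) = val l. Proof. by []. Qed.
Lemma vtx_s0 l : vtx l != s0.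
Proof. by apply/eqP => /(congr1 val) /=; move: (ltn_ord l) => /[swap] ->; rewrite ltnn. Qed.
Lemma s0_vtx l : s0 != vtx l.
Proof. by rewrite eq_sym vtx_s0. Qed.
Lemma vtx_inj : injective vtx.
Proof. by move=> x y /(congr1 val) /= /val_inj. Qed.

Lemma nvtx (i : 'I_n) : i != s0 -> exists l, i = vtx l.
Proof.
move=> is0; have im : (nat_of_ord i < m)%N.
  have ne : nat_of_ord i <> m by move=> e; case/eqP: is0; apply/val_inj.
  have := ltn_ord i; have := nm1; lia.
by exists (Ordinal im); apply: val_inj.
Qed.

Lemma img_hyp (g : mon n) l : img g l = (g (vtx l) * d + g s0 * w l)%N.
Proof.
rewrite ffunE (bigD1 s0) //= (bigD1 (vtx l)) /=; last by rewrite vtx_s0.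
rewrite big1 ?addn0.
  by rewrite (avert (vtx_val l)) eqxx addnC.
move=> i /andP[is0 il]; have [l' e] := nvtx is0; subst i.
rewrite (avert (vtx_val l')); case: eqP => [e|]; last by rewrite muln0.
by move: il; rewrite e eqxx.
Qed.

Lemma vtx_avert l l' : a (vtx l) l' = if l' == l then d else 0%N.
Proof. exact: avert. Qed.

Lemma hyp_bad (l : 'I_m) : smooth_V k a ->
  exists2 kk : 'I_m, kk != l &
    (exists t, t * w kk = d)%N /\ forall l', l' != l -> l' != kk -> w l' = 0%N.
Proof.
move=> Hs.
have := jac_bound (vtx_val l) Hs.
have -> : (n - m = 1)%N by lia.
case/card_gt0P => j; rewrite inE => /andP[jl /asbP [c [g [Eg ng]]]].
have gj := bad_gj0 (vtx_val l) jl Eg ng.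
have Ec l' := congr1 (fun f : mon m => f l') Eg.
case: (eqVneq j s0) => [js0|js0].
  subst j; exfalso.
  have wz : forall l', l' != l -> w l' = 0%N.
    move=> l' l'l; have := Ec l'; rewrite /= img_hyp img_alpha gj mul0n addn0 vtx_avert (negbTE l'l) muln0 add0n.
    case: (posnP (g (vtx l'))) => [->|gp]; first by rewrite mul0n.
    have H1 := adeg_lt (vtx_val l') (s0_vtx l').
    move=> E; have := leq_pmull d gp; rewrite /w in E; lia.
  have := asum s0; rewrite (bigD1 l) //= big1 ?addn0; last by move=> l' /wz.
  have := adeg_lt (vtx_val l) (s0_vtx l).
  rewrite /w; lia.
have [kk e] := nvtx js0; subst j.
have kl : kk != l by apply: contraNneq jl => ->.
exists kk => //; split.
  exists (g s0); have := Ec kk; rewrite /= img_hyp img_alpha gj mul0n add0n !vtx_avert eqxx (negbTE kl) muln0 add0n.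
  by rewrite /w.
move=> l' l'l l'k.
have gs0 : (0 < g s0)%N.
  have := Ec kk; rewrite /= img_hyp img_alpha gj mul0n add0n !vtx_avert eqxx (negbTE kl) muln0 add0n.
  by case: (g s0) => //= E; move: d_gt0; rewrite -E.
have := Ec l'; rewrite /= img_hyp img_alpha !vtx_avert (negbTE l'l) (negbTE l'k) muln0 add0n.
move=> E; have : (g s0 * w l' = 0)%N by lia.
by move/eqP; rewrite muln_eq0 (gtn_eqF gs0) /= => /eqP.
Qed.

Lemma hyp_m2 : smooth_V k a -> (1 < m)%N -> m = 2%N.
Proof.
move=> Hs m2; apply/eqP; rewrite eqn_leq m2 andbT leqNgt; apply/negP => m3.
have m0 : (0 < m)%N by lia.
have m1 : (1 < m)%N by lia.
pose l0 : 'I_m := Ordinal m0.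
have [kk0 k0l [[t0 Et0] Hz0]] := hyp_bad l0 Hs.
have [l1 [l1l0 l1k0]] : exists l1 : 'I_m, l1 != l0 /\ l1 != kk0.
  case: (eqVneq (nat_of_ord kk0) 1%N) => e.
    exists (Ordinal m3); split; apply/eqP => /(congr1 val) /=; rewrite ?e //.
  exists (Ordinal m1); split; apply/eqP => /(congr1 val) /= //.
  by move=> e'; rewrite -e' eqxx in e.
have [kk1 k1l [_ Hz1]] := hyp_bad l1 Hs.
have wk0 : (0 < w kk0)%N by case: (w kk0) Et0 => //; rewrite muln0 => E; move: d_gt0; rewrite -E.
have e01 : kk0 = kk1.
  apply/eqP; apply/negPn/negP => ne; move: wk0; rewrite Hz1 //; by rewrite eq_sym.
have wl0 : w l0 = 0%N by apply: Hz1; [by rewrite eq_sym | by rewrite -e01 eq_sym].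
have := asum s0; rewrite (bigD1 kk0) //= big1 ?addn0.
  have := adeg_lt (vtx_val kk0) (s0_vtx kk0); rewrite /w; lia.
move=> l' l'k; case: (eqVneq l' l0) => [->//|l'l0]; exact: Hz0.
Qed.

Lemma hyp_eq : smooth_V k a -> m = 2%N -> forall l l' : 'I_m, w l = w l'.
Proof.
move=> Hs m2 l l'; case: (eqVneq l l') => [->//|ll'].
have oth : forall x : 'I_m, x != l -> x = l'.
  move=> x xl; apply: val_inj; rewrite /=; move: (ltn_ord x) (ltn_ord l) (ltn_ord l').
  have : nat_of_ord x <> nat_of_ord l by move=> e; case/eqP: xl; apply: val_inj.
  have : nat_of_ord l' <> nat_of_ord l by move=> e; case/eqP: ll'; apply: val_inj.
  lia.
have oth' : forall x : 'I_m, x != l' -> x = l.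
  move=> x xl; apply: val_inj; rewrite /=; move: (ltn_ord x) (ltn_ord l) (ltn_ord l').
  have : nat_of_ord x <> nat_of_ord l' by move=> e; case/eqP: xl; apply: val_inj.
  have : nat_of_ord l' <> nat_of_ord l by move=> e; case/eqP: ll'; apply: val_inj.
  lia.
have [kk kl [[t Et] _]] := hyp_bad l Hs.
have [kk' kl' [[t' Et'] _]] := hyp_bad l' Hs.
rewrite (oth _ kl) in Et; rewrite (oth' _ kl') in Et'.
have := asum s0; rewrite (bigD1 l) //= (bigD1 l') /=; last by rewrite eq_sym ll'.
rewrite big1 ?addn0; last first.
  by move=> x /andP[xl xl']; move: (oth _ xl) => e; rewrite e eqxx in xl'.
rewrite /w in Et Et' *; move=> S.
set x := a s0 l in Et' S *; set y := a s0 l' in Et S *.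
have xp : (0 < x)%N.
  rewrite lt0n; apply/eqP => Ez; rewrite Ez muln0 in Et'; by move: d_gt0; rewrite -Et'.
have yp : (0 < y)%N.
  rewrite lt0n; apply/eqP => Ez2; rewrite Ez2 muln0 in Et; by move: d_gt0; rewrite -Et.
have t2 : (2 <= t)%N.
  rewrite ltnNge; apply/negP => t1; have := leq_mul t1 (leqnn y); lia.
have t2' : (2 <= t')%N.
  rewrite ltnNge; apply/negP => t1; have := leq_mul t1 (leqnn x); lia.
have := leq_mul t2 (leqnn y); have := leq_mul t2' (leqnn x); lia.
Qed.

End Hyper.

End T.


Definition i0 : 'I_3 := @Ordinal 3 0 isT.
Definition i1 : 'I_3 := @Ordinal 3 1 isT.
Definition i2 : 'I_3 := @Ordinal 3 2 isT.
Definition j0 : 'I_2 := @Ordinal 2 0 isT.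
Definition j1 : 'I_2 := @Ordinal 2 1 isT.

Lemma sum3 (F : 'I_3 -> nat) : (\sum_(i < 3) F i = F i0 + F i1 + F i2)%N.
Proof.
rewrite !big_ord_recl big_ord0 addn0 addnA.
by congr (_ + _ + _); congr F; apply: val_inj.
Qed.

Lemma mon3P (x y : mon 3) : x i0 = y i0 -> x i1 = y i1 -> x i2 = y i2 -> x = y.
Proof.
move=> h0 h1 h2; apply/ffunP => -[[|[|[|//]]] Hj].
- by rewrite (_ : Ordinal Hj = i0) //; apply: val_inj.
- by rewrite (_ : Ordinal Hj = i1) //; apply: val_inj.
- by rewrite (_ : Ordinal Hj = i2) //; apply: val_inj.
Qed.

Lemma mon2P (x y : mon 2) : x j0 = y j0 -> x j1 = y j1 -> x = y.
Proof.
move=> h0 h1; apply/ffunP => -[[|[|//]] Hj].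
- by rewrite (_ : Ordinal Hj = j0) //; apply: val_inj.
- by rewrite (_ : Ordinal Hj = j1) //; apply: val_inj.
Qed.

Section Conic.
Variables (k : fieldType) (a : 'I_3 -> mon 2) (s : nat).
Hypotheses (s_gt0 : (0 < s)%N) (Ha : forall i l, a i l = (s * curveB i l)%N).

Lemma imgB0 (al : mon 3) : img curveB al j0 = (2 * al i0 + al i2)%N.
Proof. by rewrite ffunE sum3 !ffunE /=; lia. Qed.
Lemma imgB1 (al : mon 3) : img curveB al j1 = (2 * al i1 + al i2)%N.
Proof. by rewrite ffunE sum3 !ffunE /=; lia. Qed.

Lemma img_aB (al : mon 3) : img a al = smul s (img curveB al).
Proof.
apply/ffunP => l; rewrite !ffunE big_distrr; apply: eq_bigr => i _.
by rewrite Ha mulnCA.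
Qed.

Lemma smul_inj (x y : mon 2) : smul s x = smul s y -> x = y.
Proof.
move=> E; apply/ffunP => l; move: (congr1 (fun f : mon 2 => f l) E); rewrite !ffunE.
by move/eqP; rewrite eqn_pmul2l // => /eqP.
Qed.

Lemma inIA_aB (f : mpol k 3) : inIA a f <-> inIA curveB f.
Proof.
split => Hf b.
  rewrite mcoef_monmap -[RHS](Hf (smul s b)) mcoef_monmap; apply: eq_bigl => x.
  rewrite img_aB; apply/eqP/eqP => [->//|]; exact: smul_inj.
rewrite mcoef_monmap.
case: (boolP (has (fun x : k * mon 3 => img a x.2 == b) f)) => [/hasP[x0 x0f /eqP E0]|hn]; last first.
  by rewrite big1_seq // => y /andP[e yg]; case/negP: (hasPn hn y yg).
rewrite big_seq_cond (eq_bigl (fun x : k * mon 3 => (x \in f) && (img curveB x.2 == img curveB x0.2))); last first.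
  move=> x; case: (x \in f) => //=; rewrite -E0 !img_aB.
  by apply/eqP/eqP => [/smul_inj|->].
by rewrite -big_seq_cond -mcoef_monmap Hf.
Qed.

Definition al0 : mon 3 := madd (ev i0) (ev i1).
Definition be0 : mon 3 := smul 2 (ev i2).
Definition g0 : mpol k 3 := binom k al0 be0.

Lemma g0_in : inIA a g0.
Proof.
apply: binom_inIA; rewrite !img_aB; congr smul.
by apply: mon2P; rewrite ?imgB0 ?imgB1 !ffunE.
Qed.

Definition Kf (al : mon 3) := (al i2)./2.
Definition Tm (al : mon 3) i : mon 3 := [ffun j => if j == i2 then al j - i.*2 else al j + i]%N.
Definition Mm (al : mon 3) i : mon 3 := [ffun j => if j == i2 then al j - (i.*2 + 2) else al j + i]%N.
Definition NF al := Tm al (Kf al).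

Lemma Kf_le al : ((Kf al).*2 <= al i2)%N.
Proof. by rewrite /Kf -{2}(odd_double_half (al i2)) leq_addl. Qed.

Lemma MT1 al i : (i < Kf al)%N -> madd (Mm al i) al0 = Tm al i.+1.
Proof.
move=> iK; have := Kf_le al; rewrite -!mul2n => H.
apply: mon3P; rewrite !ffunE /=; lia.
Qed.

Lemma MT2 al i : (i < Kf al)%N -> madd (Mm al i) be0 = Tm al i.
Proof.
move=> iK; have := Kf_le al; rewrite -!mul2n => H.
apply: mon3P; rewrite !ffunE /=; lia.
Qed.

Lemma T0 al : Tm al 0 = al.
Proof. by apply: mon3P; rewrite !ffunE /= ?subn0 ?addn0. Qed.

Lemma img_NF al : img curveB (NF al) = img curveB al.
Proof.
have := Kf_le al; rewrite -!mul2n => H.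
apply: mon2P; rewrite ?imgB0 ?imgB1 !ffunE /=; lia.
Qed.

Lemma NF_inj al al' : img curveB al = img curveB al' -> NF al = NF al'.
Proof.
move=> E; have E0 := congr1 (fun f : mon 2 => f j0) E; have E1 := congr1 (fun f : mon 2 => f j1) E.
move: E0 E1; rewrite /= imgB0 imgB0 imgB1 imgB1 => E0 E1.
have h1 := odd_double_half (al i2); have h2 := odd_double_half (al' i2).
rewrite -!mul2n in h1 h2.
have o1 : (odd (al i2) <= 1)%N by case: odd.
have o2 : (odd (al' i2) <= 1)%N by case: odd.
apply: mon3P; rewrite /NF /Kf !ffunE /= -?mul2n; lia.
Qed.

Definition Hpoly (f : mpol k 3) : mpol k 3 :=
  flatten [seq [seq (- x.1, Mm x.2 i) | i <- iota 0 (Kf x.2)] | x : k * mon 3 <- f].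

Lemma mcoef_H (f : mpol k 3) g :
  mcoef (mpmul (Hpoly f) g0) g = mcoef f g - \sum_(x <- f | NF x.2 == g) x.1.
Proof.
rewrite mcoef_mpmul /Hpoly big_flatten /= big_map /mcoef.
rewrite [X in _ = X - _]big_mkcond [X in _ = _ - X]big_mkcond -sumrB; apply: eq_bigr => x _.
rewrite big_map.
transitivity (\sum_(0 <= i < Kf x.2) (- x.1) * ((Tm x.2 i.+1 == g)%:R - (Tm x.2 i == g)%:R)).
  rewrite /index_iota subn0 big_seq [RHS]big_seq; apply: eq_bigr => i.
  rewrite mem_iota add0n => /andP[_ iK].
  rewrite /g0 /binom big_mkcond !big_cons big_nil /= MT1 // MT2 //.
  by case: (Tm x.2 i.+1 == g); case: (Tm x.2 i == g); rewrite /=; ring.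
rewrite -big_distrr /= telescope_sumr // T0.
by rewrite /NF; case: (x.2 == g); case: (Tm x.2 (Kf x.2) == g); rewrite /=; ring.
Qed.

Lemma conic_ici : ici k a.
Proof.
split.
  exists (fun _ => g0); split; first by move=> _; exact: g0_in.
  move=> f Hf; exists (fun _ => Hpoly f) => g.
  rewrite mcoef_mpsum big_ord1 mcoef_H.
  suff -> : \sum_(x <- f | NF x.2 == g) x.1 = 0 by rewrite subr0.
  have HfB : inIA curveB f by apply/inIA_aB.
  case: (boolP (has (fun x : k * mon 3 => NF x.2 == g) f)) => [/hasP[x0 x0f /eqP E0]|hn]; last first.
    by rewrite big1_seq // => y /andP[e yg]; case/negP: (hasPn hn y yg).
  rewrite big_seq_cond (eq_bigl (fun x : k * mon 3 => (x \in f) && (img curveB x.2 == img curveB x0.2))); last first.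
    move=> x; case: (x \in f) => //=; rewrite -E0.
    apply/eqP/eqP => [E|/NF_inj //]; by rewrite -img_NF E img_NF.
  by rewrite -big_seq_cond -mcoef_monmap HfB.
move=> r g [Hg Hgen]; rewrite lt0n; apply/eqP => r0; subst r.
have [h Hh] := Hgen _ g0_in.
move: (Hh al0); rewrite mcoef_mpsum big_ord0 mcoef_binom eqxx.
have -> : (be0 == al0) = false.
  by apply/negbTE/eqP => /(congr1 (fun f : mon 3 => f i2)); rewrite !ffunE.
by rewrite subr0 => /eqP; rewrite oner_eq0.
Qed.

End Conic.


Theorem mainTheorem13 (k : closedFieldType) (n m : nat) (a : 'I_n -> mon m) :
  simplicial_proj_toric_data a ->
  smooth_V k a ->
  (ici k a <->
   exists sigma : 'I_n -> 'I_3, bijective sigma /\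
     forall p : 'I_3 -> k, inV (k:=k) curveB p <-> inV (k:=k) a (fun i => p (sigma i))).
Proof.
move=> [mn ainj anz [d [d0 avert asumh]]] Hs.
have asum : forall i, (\sum_(l < m) a i l)%N = d.
  move=> i; case: (leqP m i) => [mi|im]; first exact: asumh.
  pose lm : 'I_m := Ordinal im.
  rewrite (bigD1 lm) //= (avert i lm erefl) eqxx big1 ?addn0 // => l /negbTE.
  by rewrite (avert i lm erefl) => ->.
have m2 : (1 < m)%N.
  case: m a mn ainj anz avert asumh asum Hs => [|[|m']] a' mn' ainj' anz' avert' _ asum' _ //.
    have n0 : (0 < n)%N by lia.
    by case/negP: (anz' (Ordinal n0)); apply/eqP/ffunP => -[].
  have n0 : (0 < n)%N by lia.
  have n1 : (1 < n)%N by lia.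
  have : a' (Ordinal n0) = a' (Ordinal n1).
    apply/ffunP => l; rewrite (ord1 l).
    by have := asum' (Ordinal n0); have := asum' (Ordinal n1); rewrite !big_ord1 => -> ->.
  by move/ainj'/(congr1 val).
have Hcon : n = m.+1 -> ici k a /\ exists sigma : 'I_n -> 'I_3, bijective sigma /\
     forall p : 'I_3 -> k, inV (k:=k) curveB p <-> inV (k:=k) a (fun i => p (sigma i)).
  move=> nm1.
  have nm1' : (n <= m.+1)%N by rewrite nm1.
  have m2e := hyp_m2 d0 ainj asum avert mn nm1' Hs m2.
  have heq := hyp_eq d0 ainj asum avert mn nm1' Hs m2e.
  subst n; subst m.
  set w := a (Ordinal mn) in heq.
  have Hsw : (w ord0 + w ord0 = d)%N.
    rewrite -(asum (Ordinal mn)) !big_ord_recl big_ord0 addn0 /w.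
    by congr (_ + _); apply: heq.
  pose s := w ord0.
  have Ha : forall i l, a i l = (s * curveB i l)%N.
    move=> [[|[|[|//]]] Hi] [[|[|//]] Hl]; rewrite ffunE /=.
    - by rewrite (avert _ (Ordinal (isT : (0 < 2)%N))) //=; lia.
    - by rewrite (avert _ (Ordinal (isT : (0 < 2)%N))) //=; lia.
    - by rewrite (avert _ (Ordinal (isT : (1 < 2)%N))) //=; lia.
    - by rewrite (avert _ (Ordinal (isT : (1 < 2)%N))) //=; lia.
    - rewrite muln1 /s (_ : Ordinal Hi = Ordinal mn); last exact: val_inj.
      exact: heq.
    - rewrite muln1 /s (_ : Ordinal Hi = Ordinal mn); last exact: val_inj.
      exact: heq.
  have s0 : (0 < s)%N by rewrite /s; lia.
  split; first exact: conic_ici s0 Ha.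
  exists id; split; first by exists id.
  move=> p; rewrite /inV; split => -[H1 H2]; split => // f Hf; apply: H2.
    by apply/(inIA_aB s0 Ha).
  by apply/(inIA_aB s0 Ha).
split.
  move=> Hici; apply: (Hcon _).2.
  have : ~ (1 < n - m)%N by move=> H; exact: (not_ici_big d0 ainj asum avert Hs m2 mn H).
  lia.
move=> [sigma [bs _]].
have n3 : n = 3%N.
  have [g sg gs] := bs.
  have h1 := @leq_card _ _ sigma (bij_inj bs); have h2 := @leq_card _ _ g (can_inj gs).
  rewrite !card_ord in h1 h2; lia.
apply: (Hcon _).1; lia.
Qed.
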